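(* In the setting below, let $(x_f,y_f,\theta_f)$ be any goal pose. Consider a $4\pi$-arc $LSL$ path reaching this goal pose whose travel time is minimal among all $4\pi$-arc $LSL$ paths reaching it. It satisfies $\alpha+\gamma<4\pi$. The same holds for $RSR$: a $4\pi$-arc $RSR$ path reaching the goal pose whose travel time is minimal among all $4\pi$-arc $RSR$ paths reaching it satisfies $\alpha+\gamma<4\pi$.
   Context: Setting: a vehicle moves in the plane at unit speed with minimum turning radius $r>0$, in a steady current $(w_x,w_y)$ with speed $v_w=\sqrt{w_x^2+w_y^2}\in(0,1)$. The start pose is $(0,0,0)$ and the goal pose is $(x_f,y_f,\theta_f)$ with $\theta_f\in[0,2\pi)$. An $LSL$ path has parameters $(\alpha,\beta,\gamma)$ with $\alpha,\gamma\ge0$ and $\beta\ge0$: a left arc of angle $\alpha$ of radius $r$, a straight segment of length $\beta$, and a left arc of angle $\gamma$, in the frame moving with the current. Its travel time is $T=r(\alpha+\gamma)+\beta$. It reaches the goal iff for some $k\in\mathbb{Z}$: $\alpha+\gamma=2k\pi+\theta_f$, $x_f-w_xT=r\sin\theta_f+\beta\cos\alpha$, and $y_f-w_yT=r(1-\cos\theta_f)+\beta\sin\alpha$. An $RSR$ path is the analogous path with right arcs, with $T=r(\alpha+\gamma)+\beta$. It reaches the goal iff for some $k\in\mathbb{Z}$: $-\alpha-\gamma=2k\pi+\theta_f$, $x_f-w_xT=-r\sin\theta_f+\beta\cos\alpha$, and $y_f-w_yT=-r(1-\cos\theta_f)-\beta\sin\alpha$. A path is a $4\pi$-arc path if $\alpha,\gamma\in[0,4\pi)$.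 *)

(* Defs.v *)
From Stdlib Require Import Reals ZArith.
Open Scope R_scope.

Definition travel_time (r alpha beta gamma : R) : R := r * (alpha + gamma) + beta.

(* LSL path (alpha, beta, gamma) reaches goal (xf, yf, thf) in current (wx, wy). *)
Definition LSL_reaches (r wx wy xf yf thf alpha beta gamma : R) : Prop :=
  0 <= alpha /\ 0 <= beta /\ 0 <= gamma /\
  exists k : Z,
    alpha + gamma = 2 * IZR k * PI + thf /\
    xf - wx * travel_time r alpha beta gamma = r * sin thf + beta * cos alpha /\
    yf - wy * travel_time r alpha beta gamma = r * (1 - cos thf) + beta * sin alpha.

Definition RSR_reaches (r wx wy xf yf thf alpha beta gamma : R) : Prop :=
  0 <= alpha /\ 0 <= beta /\ 0 <= gamma /\
  exists k : Z,
    - alpha - gamma = 2 * IZR k * PI + thf /\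
    xf - wx * travel_time r alpha beta gamma = - r * sin thf + beta * cos alpha /\
    yf - wy * travel_time r alpha beta gamma = - r * (1 - cos thf) - beta * sin alpha.

Definition four_pi_arc (alpha gamma : R) : Prop :=
  0 <= alpha < 4 * PI /\ 0 <= gamma < 4 * PI.

Definition setting (r wx wy thf : R) : Prop :=
  0 < r /\ 0 < sqrt (wx ^ 2 + wy ^ 2) < 1 /\ 0 <= thf < 2 * PI.

(* Main.v *)
Require Import Defs.
From Stdlib Require Import Reals ZArith Lra Psatz.
Open Scope R_scope.

Lemma angle_ex c s : c^2 + s^2 = 1 -> exists a, 0 <= a <= 2*PI /\ cos a = c /\ sin a = s.
Proof.
  intros H.
  assert (Hc : -1 <= c <= 1) by nra.
  pose proof (acos_bound c) as Hb.
  pose proof (cos_acos c Hc) as Hca.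
  pose proof (sin_acos c Hc) as Hsa.
  assert (Hs2 : sqrt (1 - c²) = Rabs s).
  { rewrite <- sqrt_Rsqr_abs. f_equal. unfold Rsqr. lra. }
  pose proof PI_RGT_0.
  destruct (Rle_dec 0 s) as [Hs|Hs].
  - exists (acos c). split; [lra|]. split; auto. rewrite Hsa, Hs2, Rabs_right; lra.
  - exists (2*PI + - acos c). split; [lra|].
    rewrite cos_plus, sin_plus, cos_neg, sin_neg, cos_2PI, sin_2PI, Hca, Hsa, Hs2, Rabs_left; lra.
Qed.

Lemma core r wx wy A B S beta c s :
  0 < r -> wx^2 + wy^2 < 1 -> 4*PI <= S < 8*PI -> 0 <= beta -> c^2 + s^2 = 1 ->
  A - wx * (r*S + beta) = beta * c -> B - wy * (r*S+beta) = beta * s ->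
  exists a' b' g', 0 <= a' < 4*PI /\ 0 <= b' /\ 0 <= g' < 4*PI /\ a' + g' = S - 2*PI /\
    A - wx * (r*(a'+g') + b') = b' * cos a' /\ B - wy * (r*(a'+g') + b') = b' * sin a' /\
    r*(a'+g') + b' < r*S + beta.
Proof.
  intros Hr Hw HS Hb Hcs HA HB.
  pose proof PI_RGT_0 as HPI.
  set (S' := S - 2*PI).
  set (Qx := A - wx*r*S'). set (Qy := B - wy*r*S').
  set (m := wx^2+wy^2). set (p := Qx*wx + Qy*wy). set (q := Qx^2+Qy^2).
  assert (Hdisc : 0 <= p^2 + (1-m)*q) by (unfold m, q; nra).
  set (sq := sqrt (p^2 + (1-m)*q)).
  assert (Hsq : sq*sq = p^2 + (1-m)*q) by (apply sqrt_sqrt; auto).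
  assert (Hsq0 : 0 <= sq) by apply sqrt_pos.
  set (D := (- p + sq) / (1-m)).
  assert (H1m : 0 < 1 - m) by (unfold m; lra).
  assert (HpD : sq >= p).
  { destruct (Rle_dec p 0); [lra|]. assert (p^2 <= sq*sq) by (rewrite Hsq; unfold q; nra). nra. }
  assert (HD0 : 0 <= D) by (unfold D; apply Rmult_le_pos; [lra | left; apply Rinv_0_lt_compat; lra]).
  assert (HDeq : (1-m)*D^2 + 2*p*D - q = 0).
  { assert (HDm : (1-m)*D = sq - p) by (unfold D; field; lra).
    apply (Rmult_eq_reg_l (1-m)); [|lra].
    replace ((1-m)*((1-m)*D^2 + 2*p*D - q)) with (((1-m)*D)^2 + 2*p*((1-m)*D) - (1-m)*q) by ring.
    rewrite HDm. nra. }
  set (Vx := Qx - wx*D). set (Vy := Qy - wy*D).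
  assert (HV : Vx^2 + Vy^2 = D^2) by (unfold Vx, Vy; unfold p, q, m in *; nra).
  assert (Hu : exists c' s', c'^2 + s'^2 = 1 /\ Vx = D*c' /\ Vy = D*s').
  { destruct (Req_dec D 0) as [HD|HD].
    - exists 1, 0. rewrite HD in *. split; [ring|]. split; nra.
    - exists (Vx/D), (Vy/D). split; [|split; field; auto].
      field_simplify; auto. rewrite HV. field. auto. }
  destruct Hu as [c' [s' [Hu1 [HVx HVy]]]].
  destruct (angle_ex c' s' Hu1) as [a0 [Ha0 [Hca Hsa]]].
  assert (HT : r*S' + D < r*S + beta).
  { destruct (Rlt_le_dec (r*S' + D) (r*S + beta)) as [h|h]; auto. exfalso.
    set (d := r*S' + D - (r*S+beta)).
    assert (HDd : D = beta + d + 2*PI*r) by (unfold d, S'; ring).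
    assert (HVx' : Vx = beta*c - wx*d) by (unfold Vx, Qx, d; rewrite <- HA; ring).
    assert (HVy' : Vy = beta*s - wy*d) by (unfold Vy, Qy, d; rewrite <- HB; ring).
    assert (Hcw : (c*wx + s*wy)^2 < 1).
    { assert (HCS : (c*wx+s*wy)^2 <= (c^2+s^2)*m) by (unfold m; pose proof (pow2_ge_0 (c*wy - s*wx)); nra). rewrite Hcs in HCS. unfold m in *; nra. }
    assert (Hcw2 : -1 <= c*wx + s*wy) by nra.
    assert (Hd0 : 0 <= d) by (unfold d; lra).
    assert (HX : (beta*c - wx*d)^2 + (beta*s - wy*d)^2 = beta^2 - 2*beta*d*(c*wx+s*wy) + d^2*m)
      by (replace (beta^2) with (beta^2*(c^2+s^2)) by (rewrite Hcs; ring); unfold m; ring).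
    rewrite <- HVx', <- HVy', HV, HDd in HX.
    assert (0 < 2*PI*r) by nra.
    assert (d^2*m <= d^2) by (unfold m; nra).
    assert (Hbd : 0 <= beta*d) by nra. assert (0 <= beta*d*(1 + (c*wx+s*wy))) by (apply Rmult_le_pos; lra). assert (-2*beta*d*(c*wx+s*wy) <= 2*beta*d) by nra.
    nra. }
  assert (HS'0 : 2*PI <= S') by (unfold S'; lra).
  destruct (Rlt_le_dec (S' - a0) (4*PI)) as [h|h].
  - exists a0, D, (S' - a0). split; [lra|]. split; [lra|]. split; [lra|].
    replace (a0 + (S' - a0)) with S' by ring. split; [unfold S'; ring|].
    split; [rewrite ?Hca, ?Hsa; replace (A - wx*(r*S'+D)) with Vx by (unfold Vx,Qx; ring); rewrite HVx; ring|].
    split; [rewrite ?Hca, ?Hsa; replace (B - wy*(r*S'+D)) with Vy by (unfold Vy,Qy; ring); rewrite HVy; ring|]. exact HT.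
  - exists (a0 + 2*PI), D, (S' - a0 - 2*PI). split; [unfold S' in h; lra|]. split; [lra|]. split; [unfold S' in *; lra|].
    replace (a0 + 2*PI + (S' - a0 - 2*PI)) with S' by ring. split; [unfold S'; ring|].
    rewrite cos_plus, sin_plus, cos_2PI, sin_2PI.
    split; [rewrite ?Hca, ?Hsa; replace (A - wx*(r*S'+D)) with Vx by (unfold Vx,Qx; ring); rewrite HVx; ring|].
    split; [rewrite ?Hca, ?Hsa; replace (B - wy*(r*S'+D)) with Vy by (unfold Vy,Qy; ring); rewrite HVy; ring|]. exact HT.
Qed.

Lemma w_lt1 wx wy : sqrt (wx ^ 2 + wy ^ 2) < 1 -> wx^2 + wy^2 < 1.
Proof.
  intros H. destruct (Rlt_le_dec (wx^2+wy^2) 1) as [h|h]; auto.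
  exfalso. assert (sqrt 1 <= sqrt (wx^2+wy^2)) by (apply sqrt_le_1_alt; lra).
  rewrite sqrt_1 in H0. lra.
Qed.

Theorem corollary2 :
  forall r wx wy xf yf thf : R,
    setting r wx wy thf ->
    (forall alpha beta gamma : R,
        LSL_reaches r wx wy xf yf thf alpha beta gamma ->
        four_pi_arc alpha gamma ->
        (forall a' b' g' : R,
            LSL_reaches r wx wy xf yf thf a' b' g' -> four_pi_arc a' g' ->
            travel_time r alpha beta gamma <= travel_time r a' b' g') ->
        alpha + gamma < 4 * PI)
    /\
    (forall alpha beta gamma : R,
        RSR_reaches r wx wy xf yf thf alpha beta gamma ->
        four_pi_arc alpha gamma ->
        (forall a' b' g' : R,
            RSR_reaches r wx wy xf yf thf a' b' g' -> four_pi_arc a' g' ->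
            travel_time r alpha beta gamma <= travel_time r a' b' g') ->
        alpha + gamma < 4 * PI).
Proof.
  intros r wx wy xf yf thf [Hr [[_ Hw] Hth]].
  apply w_lt1 in Hw.
  split.
  - intros al be ga [Ha [Hb [Hg [k [Hk [Hx Hy]]]]]] Hf Hmin.
    destruct (Rlt_le_dec (al+ga) (4*PI)) as [h|h]; auto. exfalso.
    unfold travel_time, four_pi_arc in *.
    assert (Hcs : cos al ^2 + sin al ^2 = 1) by (rewrite <- (sin2_cos2 al); unfold Rsqr; ring).
    destruct (core r wx wy (xf - r*sin thf) (yf - r*(1-cos thf)) (al+ga) be (cos al) (sin al)
                Hr Hw ltac:(lra) Hb Hcs ltac:(lra) ltac:(lra))
      as [a' [b' [g' [Ha' [Hb' [Hg' [Hsum [Hx' [Hy' HT]]]]]]]]].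
    assert (Hle := Hmin a' b' g').
    unfold travel_time in Hle.
    assert (r * (al + ga) + be <= r * (a' + g') + b'); [|lra].
    apply Hle; [|split; lra].
    split; [lra|]. split; [lra|]. split; [lra|].
    exists (k - 1)%Z. rewrite minus_IZR. split; [rewrite Hsum, Hk; ring|]. unfold travel_time; split; [rewrite <- Hx'; ring | rewrite <- Hy'; ring].
  - intros al be ga [Ha [Hb [Hg [k [Hk [Hx Hy]]]]]] Hf Hmin.
    destruct (Rlt_le_dec (al+ga) (4*PI)) as [h|h]; auto. exfalso.
    unfold travel_time, four_pi_arc in *.
    assert (Hcs : cos al ^2 + sin al ^2 = 1) by (rewrite <- (sin2_cos2 al); unfold Rsqr; ring).
    assert (Hw' : wx^2 + (-wy)^2 < 1) by lra.
    assert (E1 : xf + r*sin thf - wx * (r*(al+ga) + be) = be * cos al).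
    { unfold travel_time in Hx. replace (be * cos al) with ((- r * sin thf + be * cos al) + r * sin thf) by ring.
      rewrite <- Hx. ring. }
    assert (E2 : -(yf + r*(1-cos thf)) - (-wy) * (r*(al+ga) + be) = be * sin al).
    { unfold travel_time in Hy. replace (be * sin al) with (-( - r * (1 - cos thf) - be * sin al) - r*(1-cos thf)) by ring.
      rewrite <- Hy. ring. }
    destruct (core r wx (-wy) (xf + r*sin thf) (-(yf + r*(1-cos thf))) (al+ga) be (cos al) (sin al)
                Hr Hw' ltac:(lra) Hb Hcs E1 E2)
      as [a' [b' [g' [Ha' [Hb' [Hg' [Hsum [Hx' [Hy' HT]]]]]]]]].
    assert (Hle := Hmin a' b' g').
    unfold travel_time in Hle.
    assert (r * (al + ga) + be <= r * (a' + g') + b'); [|lra].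
    apply Hle; [|split; lra].
    split; [lra|]. split; [lra|]. split; [lra|].
    exists (k + 1)%Z. rewrite plus_IZR. split; [replace (-a'-g') with (-(a'+g')) by ring; rewrite Hsum; replace (- (al+ga - 2*PI)) with (-al-ga + 2*PI) by ring; rewrite Hk; ring|]. unfold travel_time; split; [rewrite <- Hx'; ring | rewrite <- Hy'; ring].
Qed.
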